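(* Let $\epsilon:[0,\infty)\to\mathbb{R}$ be a differentiable function with $\epsilon(t)>0$ and $\dot\epsilon(t)<0$ for all $t$, and $\lim_{t\to\infty}\dot\epsilon(t)\,\epsilon^{-2}(t)=0$. Then $\lim_{t\to\infty}e^{-t}\epsilon^{-1}(t)=0$. *)

(* Defs.v *)
From Stdlib Require Import Reals.
From Coquelicot Require Import Coquelicot.
Open Scope R_scope.

(* [is_derive_nonneg f t l]: f, viewed as a function on [0, +oo), has
   derivative l at t >= 0; the difference quotient is taken only over
   increments h <> 0 with t + h in [0, +oo) (one-sided at t = 0). *)
Definition is_derive_nonneg (f : R -> R) (t l : R) : Prop :=
  filterlim (fun h => (f (t + h) - f t) / h)
    (within (fun h => h <> 0 /\ 0 <= t + h) (locally 0))
    (locally l).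

(* Main.v *)
Require Import Defs.
From Stdlib Require Import Reals Lra.
From Coquelicot Require Import Coquelicot.
Open Scope R_scope.

Lemma der_pos (eps : R -> R) t l : 0 < t -> is_derive_nonneg eps t l -> is_derive eps t l.
Proof.
  intros Ht H. apply is_derive_Reals. intros e He.
  assert (Hb := H (ball l e) (locally_ball l (mkposreal e He))).
  destruct Hb as [d Hd].
  assert (Hm : 0 < Rmin d t) by (apply Rmin_pos; [apply cond_pos | lra]).
  exists (mkposreal _ Hm). intros h Hh0 Hh. simpl in Hh.
  assert (Hh1 := Rmin_l d t). assert (Hh2 := Rmin_r d t).
  assert (B : ball 0 d h).
  { unfold ball; simpl; unfold AbsRing_ball, abs, minus, plus, opp; simpl.
    replace (h + - 0) with h by ring. lra. }
  specialize (Hd h B). simpl in Hd.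
  assert (0 <= t + h).
  { destruct (Rabs_def2 h (Rmin d t)) as [_ ?]; lra. }
  specialize (Hd (conj Hh0 H0)).
  revert Hd. unfold ball; simpl; unfold AbsRing_ball, abs, minus, plus, opp; simpl. auto.
Qed.

Theorem lemma2 (eps deps : R -> R)
  (Hder : forall t, 0 <= t -> is_derive_nonneg eps t (deps t))
  (Hpos : forall t, 0 <= t -> 0 < eps t)
  (Hdec : forall t, 0 <= t -> deps t < 0)
  (Hlim : is_lim (fun t => deps t / (eps t) ^ 2) p_infty 0) :
  is_lim (fun t => exp (- t) / eps t) p_infty 0.
Proof.
  apply is_lim_spec in Hlim.
  destruct (Hlim (mkposreal 1 Rlt_0_1)) as [T0 HT0]. simpl in HT0.
  set (a := Rmax T0 0 + 1).
  assert (Ha0 : 0 < a) by (unfold a; assert (Hq := Rmax_r T0 0); lra).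
  assert (HaT : T0 < a) by (unfold a; assert (H := Rmax_l T0 0); lra).
  set (C := / eps a).
  assert (HC : 0 < C) by (apply Rinv_0_lt_compat, Hpos; lra).
  assert (Hg : forall b, a <= b -> / eps b <= C + b).
  { intros b Hb.
    assert (Hd : forall x, a <= x -> is_derive (fun y => / eps y) x (- deps x / eps x ^ 2)).
    { intros x Hx. apply is_derive_inv.
      - apply der_pos; [lra|]. apply Hder; lra.
      - apply Rgt_not_eq, Hpos; lra. }
    destruct (MVT_gen (fun y => / eps y) a b (fun x => - deps x / eps x ^ 2)) as [c [Hc Heq]].
    - intros x Hx. rewrite Rmin_left in Hx by lra. apply Hd; lra.
    - intros x Hx. rewrite Rmin_left in Hx by lra. rewrite Rmax_right in Hx by lra.
      apply continuity_pt_filterlim. apply (ex_derive_continuous (fun y => / eps y)).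
      eexists. apply Hd; lra.
    - rewrite Rmin_left in Hc by lra. rewrite Rmax_right in Hc by lra.
      simpl in Heq. fold C in Heq.
      assert (Hc1 : T0 < c). { apply Rlt_le_trans with a; [exact HaT | apply Hc]. } apply HT0 in Hc1.
      rewrite Rminus_0_r in Hc1. change (eps c * (eps c * 1)) with (eps c ^ 2) in Hc1, Heq.
      assert (- deps c / eps c ^ 2 <= 1).
      { unfold Rdiv in *. rewrite Ropp_mult_distr_l_reverse.
        apply Rabs_def2 in Hc1. lra. }
      assert (0 <= b - a) by lra.
      assert (- deps c / eps c ^ 2 * (b - a) <= 1 * (b - a)) by (apply Rmult_le_compat_r; lra).
      lra. }
  apply is_lim_spec. intros e. simpl.
  exists (Rmax a (4 * (C + 1) / e)). intros t Ht.
  assert (Hta : a < t) by (eapply Rle_lt_trans; [apply Rmax_l|exact Ht]).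
  assert (Hte : 4 * (C + 1) / e < t) by (eapply Rle_lt_trans; [apply Rmax_r|exact Ht]).
  assert (He := cond_pos e).
  assert (Hep := Hpos t ltac:(lra)).
  rewrite Rminus_0_r.
  assert (Hpos2 : 0 < exp (- t) / eps t) by (apply Rdiv_lt_0_compat; [apply exp_pos|lra]).
  rewrite Rabs_pos_eq by lra.
  assert (Hgt := Hg t ltac:(lra)).
  assert (Hex : t * t / 4 < exp t).
  { replace t with (t/2 + t/2) at 3 by field. rewrite exp_plus.
    assert (1 + t/2 < exp (t/2)) by (apply exp_ineq1; lra).
    assert (0 < 1 + t/2) by lra.
    apply Rle_lt_trans with ((1 + t/2) * (1 + t/2)).
    - nra.
    - apply Rmult_le_0_lt_compat; lra. }
  assert (Hee : exp (- t) = / exp t) by apply exp_Ropp.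
  unfold Rdiv. rewrite Hee.
  assert (Hx : 0 < exp t) by apply exp_pos.
  apply Rle_lt_trans with (/ exp t * (C + t)).
  { apply Rmult_le_compat_l; [left; apply Rinv_0_lt_compat; lra | exact Hgt]. }
  apply Rmult_lt_reg_l with (exp t); [lra|].
  rewrite <- Rmult_assoc, Rinv_r by lra. rewrite Rmult_1_l.
  assert (4 * (C + 1) < e * t).
  { apply Rmult_lt_compat_r with (r := e) in Hte; [|lra].
    unfold Rdiv in Hte. rewrite Rmult_assoc, Rinv_l in Hte by lra. lra. }
  assert (e * (t * t / 4) < e * exp t) by (apply Rmult_lt_compat_l; lra).
  assert (Ht1 : 1 <= t) by (unfold a in Hta; assert (Hq := Rmax_r T0 0); lra).
  assert (C + t <= (C + 1) * t) by nra.
  assert (4 * (C + 1) * t < e * t * t) by (apply Rmult_lt_compat_r; lra).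
  nra.
Qed.
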